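(* Let $SG$ be a signed graph and $e,e'$ two distinct parallel edges of $SG$ with the same sign (parallel meaning they join the same pair of vertices, where the two endpoints may coincide, i.e. both may be loops at the same vertex). Then for all $i$, $H^i(SG)\cong H^i(SG-e')$ and $H^i_b(SG)\cong H^i_b(SG-e')$.
   Context: Signed graphs: $SG=(G,\sigma)$, $G$ finite (loops, multiple edges allowed), $\sigma:E(G)\to\{\pm1\}$; $SG-e'$ deletes $e'$. Negative circuit: product of edge signs $-1$ (a loop is a circuit of one edge); balanced = no negative circuit. $[G:s]$, $[SG:s]$: spanning subgraph with edge set $s$. Complexes: Fix a total order on $E(G)$. An enhanced state of $G$ is $S=(s,c)$, $c$ labels each component of $[G:s]$ by $1$ or $x$; $j(S)$ = number of $x$-labels (grading). With $m(1,1)=1$, $m(1,x)=m(x,1)=x$, $m(x,x)=0$: for $a\notin s$, $S_a=(s\cup\{a\},c_a)$ where a component containing both ends of $a$ keeps its label and if $a$ joins components $E_i,E_j$ the merged one gets $m(c(E_i),c(E_j))$ ($S_a=0$ if both are $x$). $d(S)=\sum_{a\notin s}(-1)^{n(a)}S_a$, $n(a)$ = number of edges of $s$ preceding $a$. $H^i(SG)$: cohomology of $C^\bullet(SG)$, free on enhanced states whose $c$ assigns $1$ to every unbalanced component of $[SG:s]$, differential $d_s=f\circ d$ with $f$ projecting onto these states. $H^i_b(SG)$: cohomology of $C^\bullet_b(SG)$, free on enhanced states with $[SG:s]$ balanced, differential $d_b=f_b\circ d$, $f_b$ the analogous projection. *)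

(* Defs.v *)
From HB Require Import structures.
From mathcomp Require Import all_boot all_order all_algebra.
Set Implicit Arguments. Unset Strict Implicit. Unset Printing Implicit Defensive.
Import GRing.Theory.

(* A finite signed graph with vertex set V and edge set [edges] inside the
   ambient totally ordered set 'I_m (the total order on E(G) is the order of
   'I_m).  Each edge a has endpoints [src a], [tgt a] (possibly equal: loop);
   multiple edges are allowed.  [neg a] = true iff sigma(a) = -1. *)
Record sgraph (V : finType) (m : nat) := SGraph {
  edges : {set 'I_m};
  src : 'I_m -> V;
  tgt : 'I_m -> V;
  neg : 'I_m -> bool }.

Definition delete_edge V m (G : sgraph V m) (e' : 'I_m) : sgraph V m :=
  SGraph (edges G :\ e') (@src V m G) (@tgt V m G) (@neg V m G).

Definition parallel V m (G : sgraph V m) (e e' : 'I_m) : bool :=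
  ((src G e == src G e') && (tgt G e == tgt G e'))
  || ((src G e == tgt G e') && (tgt G e == src G e')).

Section SignedGraphComplexes.
Variables (V : finType) (m : nat) (G : sgraph V m).

Definition joins (a : 'I_m) (x y : V) : bool :=
  ((src G a == x) && (tgt G a == y)) || ((src G a == y) && (tgt G a == x)).

Definition adj (s : {set 'I_m}) : rel V := fun x y => [exists a in s, joins a x y].
Definition conn (s : {set 'I_m}) : rel V := connect (adj s).
Definition component (s : {set 'I_m}) (w : V) : {set V} := [set y | conn s w y].

(* (es, vs) is a circuit of [G : s]: distinct edges es_0..es_(k-1) and distinct
   vertices vs_0..vs_(k-1), k >= 1, where es_i joins vs_i and vs_(i+1 mod k).
   (k = 1 is a loop.) *)
Definition is_circuit (s : {set 'I_m}) (es : seq 'I_m) (vs : seq V) : bool :=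
  [&& 0 < size es, size vs == size es, uniq es, uniq vs,
      all (fun a => a \in s) es &
      all (fun t => joins t.1 t.2.1 t.2.2) (zip es (zip vs (rot 1 vs)))].

Definition neg_circuit (s : {set 'I_m}) (es : seq 'I_m) (vs : seq V) : Prop :=
  is_circuit s es vs /\ odd (count (neg G) es).

Definition balanced (s : {set 'I_m}) : Prop :=
  forall es vs, ~ neg_circuit s es vs.

Definition unbalanced_comp (s : {set 'I_m}) (w : V) : Prop :=
  exists es vs, neg_circuit s es vs /\ all (conn s w) vs.

(* Enhanced states.  A labelling of the components of [G : s] by 1 / x is
   encoded as a vertex function c : V -> bool (true = x) constant on the
   components of [G : s]. *)
Definition state := ({set 'I_m} * {ffun V -> bool})%type.

Definition is_enhanced (S : state) : Prop :=
  S.1 \subset edges G /\ forall u v, conn S.1 u v -> S.2 u = S.2 v.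

(* i-grading |s| and j-grading: number of x-labelled components *)
Definition jdeg (S : state) : nat := #|(component S.1) @: [set w | S.2 w]|.
Definition in_degree (i j : nat) (S : state) : Prop := #|S.1| = i /\ jdeg S = j.

(* S_a (None stands for S_a = 0) *)
Definition step (S : state) (a : 'I_m) : option state :=
  let s := S.1 in let c := S.2 in
  let u := src G a in let v := tgt G a in
  if conn s u v then Some (a |: s, c)
  else if c u && c v then None
  else Some (a |: s, [ffun w => if conn s u w || conn s v w then c u || c v else c w]).

Definition npre (s : {set 'I_m}) (a : 'I_m) : nat := #|[set b in s | (b < a)%N]|.

Definition dcoef (S T : state) : int :=
  (\sum_(a in edges G :\: S.1)
     (if step S a == Some T then (-1) ^+ npre S.1 a else 0))%R.

(* the unprojected differential d, on integer chains over all states *)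
Definition dfull (x : {ffun state -> int}) (T : state) : int :=
  (\sum_(S : state) x S * dcoef S T)%R.

Definition supported (P : state -> Prop) (x : {ffun state -> int}) : Prop :=
  forall S, ~ P S -> x S = 0%R.

(* Given the predicate W selecting the basis states of the complex
   (the differential being f o d with f the projection onto W-states):
   cocycles and coboundaries in bidegree (i, j). *)
Definition cocycle (W : state -> Prop) (i j : nat) (x : {ffun state -> int}) : Prop :=
  supported (fun S => W S /\ in_degree i j S) x /\
  forall T, W T -> dfull x T = 0%R.

Definition coboundary (W : state -> Prop) (i j : nat) (x : {ffun state -> int}) : Prop :=
  supported (fun S => W S /\ in_degree i j S) x /\
  match i with
  | 0 => x = 0%R
  | i'.+1 => exists y, supported (fun S => W S /\ in_degree i' j S) y /\
                       forall T, W T -> x T = dfull y T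
  end.

(* basis states of C(SG): c assigns 1 to every unbalanced component *)
Definition W_SG (S : state) : Prop :=
  is_enhanced S /\ forall w, unbalanced_comp S.1 w -> S.2 w = false.

Definition W_b (S : state) : Prop := is_enhanced S /\ balanced S.1.

End SignedGraphComplexes.

(* Z1/B1 is isomorphic (as an abelian group) to Z2/B2: there are additive maps
   between the cocycle groups preserving coboundaries whose induced maps on the
   quotients are mutually inverse. *)
Definition quot_iso (K1 K2 : finType)
  (Z1 B1 : {ffun K1 -> int} -> Prop) (Z2 B2 : {ffun K2 -> int} -> Prop) : Prop :=
  exists (f : {ffun K1 -> int} -> {ffun K2 -> int})
         (g : {ffun K2 -> int} -> {ffun K1 -> int}),
  [/\ (forall x, Z1 x -> Z2 (f x)),
      (forall x y, Z1 x -> Z1 y -> f (x + y)%R = (f x + f y)%R) &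
      (forall x, B1 x -> B2 (f x))] /\
  [/\ (forall y, Z2 y -> Z1 (g y)),
      (forall x y, Z2 x -> Z2 y -> g (x + y)%R = (g x + g y)%R) &
      (forall y, B2 y -> B1 (g y))] /\
  (forall x, Z1 x -> B1 (g (f x) - x)%R) /\
  (forall y, Z2 y -> B2 (f (g y) - y)%R).

Definition H_iso V m (G1 G2 : sgraph V m) (i j : nat) : Prop :=
  quot_iso (cocycle G1 (W_SG G1) i j) (coboundary G1 (W_SG G1) i j)
           (cocycle G2 (W_SG G2) i j) (coboundary G2 (W_SG G2) i j).

Definition Hb_iso V m (G1 G2 : sgraph V m) (i j : nat) : Prop :=
  quot_iso (cocycle G1 (W_b G1) i j) (coboundary G1 (W_b G1) i j)
           (cocycle G2 (W_b G2) i j) (coboundary G2 (W_b G2) i j).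

(* Main.v *)
Require Import Defs.
From mathcomp Require Import all_boot all_order all_algebra zify ring.
Set Implicit Arguments. Unset Strict Implicit. Unset Printing Implicit Defensive.
Import GRing.Theory.
Local Open Scope ring_scope.

Section General.
Variables (V : finType) (m : nat) (H : sgraph V m).

Lemma step_sub (S : state V m) a (T : state V m) : step H S a = Some T -> T.1 = a |: S.1.
Proof. rewrite /step; case: ifP => [_ [<-] //|_]; case: ifP => // _ [<-] //. Qed.

Lemma dcoefE (S T : state V m) a : a \in edges H -> a \notin S.1 -> T.1 = a |: S.1 ->
  dcoef H S T = if step H S a == Some T then (-1) ^+ npre S.1 a else 0.
Proof.
move=> aE aS TE; rewrite /dcoef (bigD1 a) ?inE ?aE ?aS //= big1 ?addr0 //.
move=> b /andP[bS ba]; case: eqP => // /step_sub; rewrite TE => E.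
have: b \in b |: S.1 by rewrite setU11.
rewrite -E !inE (negbTE ba) /=; move: bS; rewrite !inE => /andP[/negbTE -> _] //.
Qed.

Lemma dcoef_nz (S T : state V m) : dcoef H S T != 0 ->
  exists a, [/\ a \in edges H, a \notin S.1 & T.1 = a |: S.1].
Proof.
move=> nz.
case: (pickP (fun a => [&& a \in edges H, a \notin S.1 & T.1 == a |: S.1])).
  by move=> a /and3P[? ? /eqP ?]; exists a.
move=> nex; move: nz; rewrite /dcoef big1 ?eqxx // => a.
rewrite !inE => /andP[aS aE]; case: eqP => // /step_sub TE.
by move: (nex a); rewrite aE aS TE eqxx.
Qed.
End General.

Lemma arith2 (k a b : nat) : (a < k)%N -> (b < k)%N -> a != b ->
  a = (if (b.+1 < k)%N then b.+1 else 0%N) -> b = (if (a.+1 < k)%N then a.+1 else 0%N) -> k = 2%N.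
Proof. move=> ak bk ab; case: ifP => c1; case: ifP => c2 h1 h2; move/eqP: ab; lia. Qed.

Section Main.
Variables (V : finType) (m : nat) (G : sgraph V m) (e e' : 'I_m).
Hypotheses (eE : e \in edges G) (e'E : e' \in edges G) (ee' : e != e')
  (par : parallel G e e') (sgn : neg G e = neg G e').

Local Notation st := (state V m).
Implicit Types (s : {set 'I_m}) (S T : st) (z u : {ffun st -> int}).

Lemma joinsC a x y : joins G a x y = joins G a y x.
Proof. by rewrite /joins orbC. Qed.

Lemma joins_par x y : joins G e x y = joins G e' x y.
Proof.
move: par; rewrite /parallel /joins.
case/orP=> /andP[/eqP -> /eqP ->] //.
by rewrite orbC; congr (_ || _); apply: andbC.
Qed.

Definition swapf (a : 'I_m) := if a == e then e' else if a == e' then e else a.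

Lemma swapfK : involutive swapf.
Proof.
move=> a; rewrite /swapf; case: (eqVneq a e) => [->|ae]; first by rewrite eqxx eq_sym (negbTE ee').
case: (eqVneq a e') => [->|ae']; first by rewrite eqxx.
by rewrite (negbTE ae) (negbTE ae').
Qed.

Lemma swapf_inj : injective swapf. Proof. exact: can_inj swapfK. Qed.

Lemma joins_swapf a x y : joins G (swapf a) x y = joins G a x y.
Proof.
rewrite /swapf; case: (eqVneq a e) => [->|ae]; first by rewrite joins_par.
by case: (eqVneq a e') => [->|//]; rewrite joins_par.
Qed.

Lemma neg_swapf a : neg G (swapf a) = neg G a.
Proof.
rewrite /swapf; case: (eqVneq a e) => [->//|ae].
by case: (eqVneq a e') => [->//|//].
Qed.

Definition sw (s : {set 'I_m}) : {set 'I_m} := swapf @^-1: s.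

Lemma in_sw s a : (a \in sw s) = (swapf a \in s).
Proof. by rewrite inE. Qed.

Lemma swK : involutive sw.
Proof. by move=> s; apply/setP=> a; rewrite !in_sw swapfK. Qed.

Lemma card_sw s : #|sw s| = #|s|.
Proof. exact: card_preimset swapf_inj. Qed.

Lemma sw_sub s : s \subset edges G -> sw s \subset edges G.
Proof.
move=> /subsetP sE; apply/subsetP => a; rewrite in_sw => /sE.
rewrite /swapf; case: (eqVneq a e) => [->//|ae].
by case: (eqVneq a e') => [->//|//].
Qed.

Lemma swU1 a s : sw (a |: s) = swapf a |: sw s.
Proof.
apply/setP=> b; rewrite !inE; congr (_ || _).
by apply/eqP/eqP => [<-|->]; rewrite swapfK.
Qed.

Lemma swapf_e : swapf e = e'. Proof. by rewrite /swapf eqxx. Qed.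
Lemma swapf_e' : swapf e' = e. Proof. by rewrite /swapf eq_sym (negbTE ee') eqxx. Qed.
Lemma swapf_id a : a != e -> a != e' -> swapf a = a.
Proof. by rewrite /swapf => /negbTE -> /negbTE ->. Qed.

Lemma sw_id s : (e \in s) = (e' \in s) -> sw s = s.
Proof.
move=> E; apply/setP=> a; rewrite in_sw /swapf.
case: (eqVneq a e) => [->|ae]; first by rewrite E.
by case: (eqVneq a e') => [->|//]; rewrite E.
Qed.

Lemma adj_sw s x y : adj G (sw s) x y = adj G s x y.
Proof.
apply/existsP/existsP => [[a /andP[as1 j]]|[a /andP[as1 j]]].
  by exists (swapf a); rewrite -in_sw joins_swapf as1.
by exists (swapf a); rewrite in_sw swapfK as1 joins_swapf.
Qed.

Lemma conn_sw s : conn G (sw s) =2 conn G s.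
Proof. exact: eq_connect (adj_sw s). Qed.

Lemma adj_e s x y : e' \in s -> adj G (e |: s) x y = adj G s x y.
Proof.
move=> e's; apply/existsP/existsP => [[a /andP[as1 j]]|[a /andP[as1 j]]].
  move: as1; rewrite !inE => /orP[/eqP ae|as1]; last by exists a; rewrite as1.
  by exists e'; rewrite e's -joins_par -ae.
by exists a; rewrite !inE as1 orbT.
Qed.

Lemma conn_e s : e' \in s -> conn G (e |: s) =2 conn G s.
Proof. by move=> e's; apply: eq_connect => x y; apply: adj_e. Qed.

Lemma conn_sym s x y : conn G s x y = conn G s y x.
Proof.
apply: sym_connect_sym => u v.
by apply/existsP/existsP => [][a /andP[as1 j]]; exists a; rewrite as1 joinsC.
Qed.

Definition swst (S : st) : st := (sw S.1, S.2).
Definition phi (S : st) : st := (e |: S.1, S.2).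

Lemma swstK : involutive swst.
Proof. by case=> s c; rewrite /swst /= swK. Qed.
Lemma swst_inj : injective swst. Proof. exact: can_inj swstK. Qed.

Lemma step_sw S a : swapf a = a -> step G (swst S) a = omap swst (step G S a).
Proof.
case: S => s c fa; rewrite /step /= !conn_sw.
case: ifP => _; first by rewrite /swst /= swU1 fa.
case: ifP => _ //=; rewrite /swst /= swU1 fa; congr (Some (_, _)).
by apply/ffunP=> w; rewrite !ffunE !conn_sw.
Qed.

Lemma step_ee' S : e \notin S.1 -> e' \notin S.1 ->
  step G S e = omap swst (step G S e').
Proof.
case: S => s c /= es e's.
have Es : sw (e' |: s) = e |: s by rewrite swU1 swapf_e' sw_id // (negbTE es) (negbTE e's).
move: par; rewrite /parallel /step.
case/orP=> /andP[/eqP -> /eqP ->].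
  case: ifP => _; first by rewrite /swst /= Es.
  by case: ifP => _ //=; rewrite /swst /= Es.
rewrite conn_sym.
case: ifP => _; first by rewrite /swst /= Es.
rewrite andbC; case: ifP => _ //=; rewrite /swst /= Es; congr (Some (_, _)).
by apply/ffunP=> w; rewrite !ffunE orbC [c (src G e') || _]orbC.
Qed.

Lemma step_e S : e' \in S.1 -> step G S e = Some (phi S).
Proof.
case: S => s c /= e's; rewrite /step /=.
suff -> : conn G s (src G e) (tgt G e) by [].
apply: connect1; apply/existsP; exists e'; rewrite e's -joins_par /joins !eqxx //.
Qed.

Lemma step_phi S a : e' \in S.1 -> step G (phi S) a = omap phi (step G S a).
Proof.
case: S => s c /= e's; rewrite /step /= !conn_e //.
case: ifP => _; first by rewrite /phi /= setUCA.
case: ifP => _ //=; rewrite /phi /= setUCA; congr (Some (_, _)).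
by apply/ffunP=> w; rewrite !ffunE !conn_e.
Qed.


Lemma step_e' S : e \in S.1 -> step G S e' = Some (e' |: S.1, S.2).
Proof.
case: S => s c /= es; rewrite /step /=.
suff -> : conn G s (src G e') (tgt G e') by [].
apply: connect1; apply/existsP; exists e; rewrite es joins_par /joins !eqxx //.
Qed.

Lemma edges_swapf a : (swapf a \in edges G) = (a \in edges G).
Proof.
rewrite /swapf; case: (eqVneq a e) => [->|ae]; first by rewrite eE e'E.
by case: (eqVneq a e') => [->|//]; rewrite eE e'E.
Qed.


Lemma npreU1 a s b : a \notin s -> npre (a |: s) b = (npre s b + (a < b))%N.
Proof.
move=> as1; rewrite /npre.
have -> : [set x in a |: s | (x < b)%N] =
   if (a < b)%N then a |: [set x in s | (x < b)%N] else [set x in s | (x < b)%N].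
  apply/setP=> x; rewrite !inE; case: (eqVneq x a) => [->|xa] /=.
    by case: ifP => ab; rewrite !inE ?eqxx ?(negbTE as1) ?ab.
  by case: ifP => _; rewrite !inE ?(negbTE xa).
case: ifP => ab; last by rewrite addn0.
by rewrite cardsU1 !inE (negbTE as1) addnC.
Qed.

Lemma sgnE (a b : nat) : odd a = odd b -> (-1) ^+ a = (-1) ^+ b :> int.
Proof. by move=> h; rewrite -signr_odd h signr_odd. Qed.

Lemma sgnN (a : nat) : - ((-1) ^+ a) = (-1) ^+ a.+1 :> int.
Proof. by rewrite exprS mulN1r. Qed.

Lemma ltC (a b : 'I_m) : a != b -> (a < b)%N = ~~ (b < a)%N.
Proof.
move=> ab; rewrite ltnNge leq_eqVlt negb_or; case: (b < a)%N; rewrite ?andbF ?andbT //.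
by rewrite eq_sym.
Qed.

Definition D := delete_edge G e'.

Lemma edgesD a : (a \in edges D) = (a != e') && (a \in edges G).
Proof. by rewrite /D /= !inE. Qed.

Lemma dcoef0 (H : sgraph V m) S T :
  (forall a, a \in edges H -> a \notin S.1 -> T.1 != a |: S.1) -> dcoef H S T = 0.
Proof.
move=> h; apply/eqP; apply: contraT => /dcoef_nz [a [aE aS TE]].
by move: (h a aE aS); rewrite TE eqxx.
Qed.

Lemma dcoef_sub (H : sgraph V m) S T a : a \in S.1 -> a \notin T.1 -> dcoef H S T = 0.
Proof.
move=> aS aT; apply: dcoef0 => b _ _; apply/eqP => TE.
by move: aT; rewrite TE !inE aS orbT.
Qed.

Lemma dcoef_DG S T : e' \notin T.1 -> dcoef D S T = dcoef G S T.
Proof.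
move=> e'T.
case: (pickP (fun a => [&& a \in edges G, a \notin S.1 & T.1 == a |: S.1])).
  move=> a /and3P[aE aS /eqP TE].
  have ae' : a != e' by apply: contraNneq e'T => <-; rewrite TE setU11.
  by rewrite (dcoefE aE aS TE) (@dcoefE _ _ D _ _ a) // edgesD ae' aE.
move=> none; rewrite !dcoef0 // => a aE aS; apply/negP => /eqP TE.
  by move: (none a); rewrite aE aS TE eqxx.
by move: (none a); move: aE; rewrite edgesD => /andP[_ ->]; rewrite aS TE eqxx.
Qed.

Ltac plia := repeat match goal with H : _ |- _ => clear H end; lia.

Definition rho (t : {set 'I_m}) : int := (-1) ^+ (npre t e + npre t e').
Definition eps S : int := (-1) ^+ npre S.1 e.

Definition fmap (x : {ffun st -> int}) : {ffun st -> int} :=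
  [ffun S : st => if e' \in S.1 then 0 else x S].
Definition gmap (y : {ffun st -> int}) : {ffun st -> int} :=
  [ffun S : st => if e' \in S.1 then (if e \in S.1 then 0 else rho (S.1 :\ e') * y (swst S))
             else y S].
Definition hmap (u : {ffun st -> int}) : {ffun st -> int} :=
  [ffun S : st => if (e' \in S.1) && (e \notin S.1) then eps S * u (phi S) else 0].
Definition dD (z : {ffun st -> int}) : {ffun st -> int} := [ffun S : st => dfull D z S].

Lemma fchain (x : {ffun st -> int}) T : e' \notin T.1 -> dfull D (fmap x) T = dfull G x T.
Proof.
move=> e'T; apply: eq_bigr => S _; rewrite ffunE.
case: ifP => e'S; first by rewrite mul0r (dcoef_sub G e'S e'T) mulr0.
by rewrite dcoef_DG.
Qed.

Lemma gchainR z T : (forall S, e' \in S.1 -> z S = 0) -> e' \notin T.1 ->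
  dfull G (gmap z) T = dfull D z T.
Proof.
move=> zs e'T; apply: eq_bigr => S _; rewrite ffunE.
case: ifP => e'S; first by rewrite (dcoef_sub G e'S e'T) (dcoef_sub D e'S e'T) !mulr0.
by rewrite dcoef_DG.
Qed.

Lemma added a s x (T : {set 'I_m}) : T = a |: s -> x \in T -> x \notin s -> x = a.
Proof. by move=> -> /setU1P[//|xs]; rewrite xs. Qed.

Lemma omap_swst (o : option st) T : (omap swst o == Some (swst T)) = (o == Some T).
Proof.
case: o => [T'|] //=; apply/eqP/eqP => [E|[->]] //.
by move: E => /(congr1 (omap swst)) /=; rewrite !swstK.
Qed.

Lemma Q1 S T : e' \in S.1 -> e \notin S.1 -> e' \in T.1 -> e \notin T.1 ->
  rho (S.1 :\ e') * dcoef G S T = rho (T.1 :\ e') * dcoef D (swst S) (swst T).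
Proof.
move=> e'S eS e'T eT.
case: (pickP (fun a => [&& a \in edges G, a \notin S.1 & T.1 == a |: S.1])); last first.
  move=> none; rewrite !dcoef0 ?mulr0 // => a aE aS; apply/negP => /eqP TE.
    have : T.1 = swapf a |: S.1 by rewrite -(swK T.1) -[in RHS](swK S.1) -swU1 -TE.
    have aS' : swapf a \notin S.1 by rewrite -in_sw.
    move=> TE'; move: (none (swapf a)); rewrite TE' eqxx andbT aS' andbT.
    by move: aE; rewrite edgesD edges_swapf => /andP[_ ->].
  by move: (none a); rewrite aE aS TE eqxx.
move=> a /and3P[aE aS /eqP TE].
have ae : a != e by apply: contraNneq eT => <-; rewrite TE setU11.
have ae' : a != e' by apply: contraNneq aS => ->.
have fa := swapf_id ae ae'.
rewrite (dcoefE aE aS TE) (@dcoefE _ _ D _ _ a); first last.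
- by rewrite /swst /= TE swU1 fa.
- by rewrite in_sw fa.
- by rewrite edgesD ae' aE.
have -> : step D (swst S) a = step G (swst S) a by [].
rewrite step_sw // omap_swst.
case: eqP => _; last by rewrite !mulr0.
set t := S.1 :\ e'.
have tS : S.1 = e' |: t by rewrite /t setD1K.
have e't : e' \notin t by rewrite /t !inE eqxx.
have et : e \notin t by rewrite /t !inE negb_and eS orbT.
have at' : a \notin t by rewrite /t !inE negb_and aS orbT.
have -> : T.1 :\ e' = a |: t.
  apply/setP=> x; rewrite TE tS !inE; case: (eqVneq x e') => [->|] //=.
  by rewrite eq_sym (negbTE ae').
have -> : (swst S).1 = e |: t.
  by rewrite /swst /= tS swU1 swapf_e' sw_id // (negbTE et) (negbTE e't).
rewrite tS /rho -!exprD; apply: sgnE.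
rewrite !npreU1 // (ltC ae) (ltC ae'); plia.
Qed.

Lemma Q2 S T : e' \notin S.1 -> e \notin S.1 -> e' \in T.1 -> e \notin T.1 ->
  dcoef G S T = rho (T.1 :\ e') * dcoef D S (swst T).
Proof.
move=> e'S eS e'T eT.
have eD : e \in edges D by rewrite edgesD ee' eE.
case: (eqVneq S.1 (T.1 :\ e')) => [SE|SE]; last first.
  rewrite !dcoef0 ?mulr0 // => a aE aS; apply/negP => /eqP TE.
    have ae : e = a by apply: (added TE) => //; rewrite /swst /= in_sw swapf_e.
    move: TE; rewrite -ae => /(congr1 sw); rewrite swK swU1 swapf_e sw_id ?(negbTE eS) ?(negbTE e'S) // => TE.
    by move: SE; rewrite TE setU1K ?eqxx.
  have ae : e' = a by apply: (added TE).
  by move: SE; rewrite TE -ae setU1K ?eqxx.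
have TE : T.1 = e' |: S.1 by rewrite SE setD1K.
rewrite (dcoefE e'E e'S TE) (@dcoefE _ _ D _ _ e) //; last first.
  by rewrite /swst /= TE swU1 swapf_e' sw_id // (negbTE eS) (negbTE e'S).
have -> : step D S e = step G S e by [].
rewrite step_ee' // omap_swst.
case: eqP => _; last by rewrite !mulr0.
rewrite -SE /rho -!exprD; apply: sgnE; plia.
Qed.

Lemma gchainQ z T : (forall S, e' \in S.1 -> z S = 0) -> e' \in T.1 -> e \notin T.1 ->
  dfull G (gmap z) T = rho (T.1 :\ e') * dfull D z (swst T).
Proof.
move=> zs e'T eT; rewrite /dfull [in RHS](reindex_inj swst_inj) mulr_sumr; apply: eq_bigr => S _.
rewrite ffunE.
case: (boolP (e \in S.1)) => eS.
  rewrite (dcoef_sub _ eS eT) mulr0 (zs (swst S)) ?mul0r ?mulr0 //.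
  by rewrite in_sw swapf_e'.
case: ifP => e'S.
  have H := Q1 e'S eS e'T eT.
  transitivity (z (swst S) * (rho (S.1 :\ e') * dcoef G S T)); first by ring.
  by rewrite H; ring.
have sS : swst S = S by case: S e'S eS => s c /= e'S eS; rewrite /swst /= sw_id // (negbTE eS) e'S.
rewrite sS (Q2 (negbT e'S) eS e'T eT) -sS; ring.
Qed.

Lemma sw_e'U s : e \notin s -> e' \notin s -> sw (e' |: s) = e |: s.
Proof. by move=> es e's; rewrite swU1 swapf_e' sw_id // (negbTE es) (negbTE e's). Qed.
Lemma sw_eU s : e \notin s -> e' \notin s -> sw (e |: s) = e' |: s.
Proof. by move=> es e's; rewrite swU1 swapf_e sw_id // (negbTE es) (negbTE e's). Qed.

Lemma int_self (k : int) : k = - k -> k = 0.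
Proof. move=> h; lia. Qed.

Section PCase.
Variables (z : {ffun st -> int}) (T : st).
Hypotheses (eT : e \in T.1) (e'T : e' \in T.1).
Let F S := gmap z S * dcoef G S T.

Lemma FQ S : e' \in S.1 -> e \notin S.1 -> F (swst S) = - F S.
Proof.
move=> e'S eS; rewrite /F !ffunE.
have e'sw : (e' \in (swst S).1) = false by rewrite /swst /= in_sw swapf_e' (negbTE eS).
rewrite e'sw e'S (negbTE eS).
set t := S.1 :\ e'.
have tS : S.1 = e' |: t by rewrite /t setD1K.
have e't : e' \notin t by rewrite /t !inE eqxx.
have et : e \notin t by rewrite /t !inE negb_and eS orbT.
have swS : (swst S).1 = e |: t by rewrite /swst /= tS sw_e'U.
suff -> : dcoef G (swst S) T = - (rho t * dcoef G S T) by ring.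
case: (eqVneq T.1 (e |: S.1)) => [TE|TE]; last first.
  have h1 : dcoef G S T = 0.
    apply: dcoef0 => a aE aS; apply/negP => /eqP TE'.
    have ae : e = a by apply: (added TE').
    by move: TE; rewrite TE' -ae eqxx.
  have h2 : dcoef G (swst S) T = 0.
    apply: dcoef0 => a aE aS; apply/negP => /eqP TE'.
    have ae : e' = a by apply: (added TE') => //; rewrite swS in_setU1 negb_or eq_sym ee' e't.
    by move: TE; rewrite TE' -ae swS tS setUCA eqxx.
  by rewrite h1 h2 mulr0 oppr0.
have TE' : T.1 = e' |: (swst S).1 by rewrite swS TE tS setUCA.
rewrite (dcoefE eE eS TE) (dcoefE e'E _ TE'); last by rewrite swS in_setU1 negb_or eq_sym ee' e't.
rewrite step_e // step_e'; last by rewrite swS setU11.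
have -> : ((e' |: (swst S).1, (swst S).2) : st) = phi S.
  by rewrite /phi -TE' -TE.
case: eqP => _; last by rewrite mulr0 oppr0.
rewrite /rho tS -!exprD sgnN swS; apply: sgnE.
rewrite !npreU1 // (ltC ee'); plia.
Qed.

Lemma FS S : F (swst S) = - F S.
Proof.
case: (boolP (e \in S.1)) => eS; case: (boolP (e' \in S.1)) => e'S.
- have sS : swst S = S by case: S eS e'S => s c /= eS e'S; rewrite /swst /= sw_id // eS e'S.
  by rewrite sS /F ffunE e'S eS mul0r oppr0.
- have : e' \in (swst S).1 by rewrite /swst /= in_sw swapf_e'.
  have : e \notin (swst S).1 by rewrite /swst /= in_sw swapf_e.
  move=> h1 h2; rewrite -[in RHS](swstK S) (FQ h2 h1) opprK //.
- exact: FQ.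
- have sS : swst S = S by case: S eS e'S => s c /= eS e'S; rewrite /swst /= sw_id // (negbTE eS) (negbTE e'S).
  rewrite sS /F (@dcoef0 G) ?mulr0 ?oppr0 // => a aE aS; apply/negP => /eqP TE.
  have h1 : e = a by apply: (added TE).
  have h2 : e' = a by apply: (added TE).
  by move: ee'; rewrite h1 h2 eqxx.
Qed.

Lemma gchainP : dfull G (gmap z) T = 0.
Proof.
apply: int_self; rewrite /dfull [LHS](reindex_inj swst_inj) -sumrN.
by apply: eq_bigr => S _; apply: FS.
Qed.
End PCase.

Lemma eps2 S : eps S * eps S = 1.
Proof. by rewrite /eps -exprD -signr_odd oddD addbb. Qed.

Lemma phi_eq T1 T2 : e \notin T1.1 -> e \notin T2.1 -> (phi T1 == phi T2) = (T1 == T2).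
Proof.
case: T1 T2 => [s1 c1] [s2 c2] /= h1 h2; apply/eqP/eqP => [[E1 ->]|->//].
by rewrite -(setU1K h1) E1 setU1K.
Qed.

Lemma homR u T : e' \notin T.1 -> (forall S, e' \notin S.1 -> u S = 0) ->
  u T = dfull G (hmap u) T.
Proof.
move=> e'T us; rewrite us // /dfull big1 // => S _; rewrite ffunE.
case: ifP => [/andP[e'S _]|_]; last by rewrite mul0r.
by rewrite (dcoef_sub G e'S e'T) mulr0.
Qed.

Lemma homP u T : e \in T.1 -> e' \in T.1 -> u T = dfull G (hmap u) T.
Proof.
move=> eT e'T; set S0 : st := (T.1 :\ e, T.2).
have eS0 : e \notin S0.1 by rewrite /S0 /= !inE eqxx.
have e'S0 : e' \in S0.1 by rewrite /S0 /= !inE eq_sym ee'.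
have TE : T.1 = e |: S0.1 by rewrite /S0 /= setD1K.
have pS0 : phi S0 = T by rewrite /phi /S0 /= setD1K //; case: (T).
rewrite /dfull (bigD1 S0) //= big1 ?addr0.
  rewrite ffunE e'S0 eS0 /= (dcoefE eE eS0 TE) step_e // pS0 eqxx.
  by rewrite mulrAC eps2 mul1r.
move=> S SS0; rewrite ffunE; case: ifP => [/andP[e'S eS]|_]; last by rewrite mul0r.
suff -> : dcoef G S T = 0 by rewrite mulr0.
case: (eqVneq T.1 (e |: S.1)) => [TE'|TE'].
  rewrite (dcoefE eE eS TE') step_e //; case: eqP => // [[pS]].
  move: SS0; rewrite /S0 -pS /phi /= setU1K //.
  by case: S {pS TE' e'S eS} => s c; rewrite eqxx.
apply: dcoef0 => a aE aS; apply/negP => /eqP TE2.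
have ae : e = a by apply: (added TE2).
by move: TE'; rewrite TE2 -ae eqxx.
Qed.

Lemma homQterm u S T : e \notin S.1 -> e' \in T.1 -> e \notin T.1 ->
  (forall S, e' \notin S.1 -> u S = 0) ->
  eps T * (hmap u S * dcoef G S T) = - (u (phi S) * dcoef G (phi S) (phi T)).
Proof.
move=> eS e'T eT us; rewrite ffunE eS andbT; case: (boolP (e' \in S.1)) => e'S /=; last first.
  rewrite us ?mul0r ?mulr0 ?oppr0 // /phi /= in_setU1 negb_or e'S andbT eq_sym //.
suff H : eps T * eps S * dcoef G S T = - dcoef G (phi S) (phi T).
  transitivity (u (phi S) * (eps T * eps S * dcoef G S T)); first by ring.
  by rewrite H; ring.
case: (pickP (fun a => [&& a \in edges G, a \notin S.1 & T.1 == a |: S.1])); last first.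
  move=> none.
  have h1 : dcoef G S T = 0.
    apply: dcoef0 => a aE aS; apply/negP => /eqP TE.
    by move: (none a); rewrite aE aS TE eqxx.
  rewrite h1 !mulr0 dcoef0 ?oppr0 // => a aE aS; apply/negP => /eqP TE.
  have ae : a != e by apply: contraNneq aS => ->; rewrite /phi /= setU11.
  have aS' : a \notin S.1 by move: aS; rewrite /phi /= in_setU1 negb_or => /andP[].
  have TE' : T.1 = a |: S.1.
    move: TE; rewrite /phi /= setUCA => E.
    rewrite -(setU1K eT) E setU1K // in_setU1 negb_or eq_sym ae //.
  by move: (none a); rewrite aE aS' TE' eqxx.
move=> a /and3P[aE aS /eqP TE].
have ae : a != e by apply: contraNneq eT => <-; rewrite TE setU11.
have aS' : a \notin (phi S).1 by rewrite /phi /= in_setU1 negb_or ae.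
have TE' : (phi T).1 = a |: (phi S).1 by rewrite /phi /= TE setUCA.
rewrite (dcoefE aE aS TE) (dcoefE aE aS' TE') step_phi //.
case E: (step G S a) => [T'|] /=; last by rewrite !mulr0 oppr0.
have eT' : e \notin T'.1 by rewrite (step_sub E) in_setU1 negb_or eq_sym ae.
rewrite -[Some (phi T') == _]/(phi T' == phi T) -[Some T' == _]/(T' == T) phi_eq //.
case: eqP => _; last by rewrite !mulr0 oppr0.
rewrite /eps TE /phi /= -!exprD sgnN; apply: sgnE.
rewrite !npreU1 // (ltC ae); plia.
Qed.

Definition tog S : st := (if e \in S.1 then S.1 :\ e else e |: S.1, S.2).
Lemma togK : involutive tog.
Proof.
case=> s c; rewrite /tog /=; case: (boolP (e \in s)) => es /=.
  by rewrite in_setD1 eqxx /= setD1K.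
by rewrite setU11 setU1K.
Qed.
Lemma tog_inj : injective tog. Proof. exact: can_inj togK. Qed.

Lemma homQ u T : e' \in T.1 -> e \notin T.1 ->
  (forall S, e' \notin S.1 -> u S = 0) -> dfull G u (phi T) = 0 ->
  u T = dfull G (hmap u) T.
Proof.
move=> e'T eT us dz.
have split1 : dfull G u (phi T) = u T * eps T +
   \sum_(S : st | e \notin S.1) u (phi S) * dcoef G (phi S) (phi T).
  rewrite /dfull (bigID (fun S : st => e \notin S.1)) /=; congr (_ + _).
    rewrite (bigD1 T) //= big1 ?addr0.
      by rewrite (@dcoefE _ _ G T (phi T) e eE eT (erefl _)) step_e // eqxx.
    move=> S /andP[eS ST]; case: (boolP (e' \in S.1)) => e'S; last by rewrite us ?mul0r.
    case: (eqVneq (phi T).1 (e |: S.1)) => [TE|TE].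
      rewrite (dcoefE eE eS TE) step_e // -[Some (phi S) == _]/(phi S == phi T) phi_eq //.
      by rewrite (negbTE ST) mulr0.
    rewrite dcoef0 ?mulr0 // => a aE aS; apply/negP => /eqP TE2.
    have ae : e = a by apply: (added TE2) => //; rewrite /phi /= setU11.
    by move: TE; rewrite TE2 -ae eqxx.
  rewrite (reindex_inj tog_inj) /=; apply: eq_big => S.
    by rewrite /tog /=; case: ifP => eS; rewrite ?setU11 // !inE eqxx.
  move=> h; have eS : e \notin S.1.
    by move: h; rewrite /tog /=; case: ifP => // _; rewrite in_setD1 eqxx.
  by rewrite /tog /= (negbTE eS).
have split2 : dfull G (hmap u) T = \sum_(S : st | e \notin S.1) hmap u S * dcoef G S T.
  rewrite /dfull (bigID (fun S : st => e \notin S.1)) /= [X in _ + X]big1 ?addr0 //.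
  by move=> S; rewrite negbK => eS; rewrite ffunE eS andbF mul0r.
have : eps T * dfull G (hmap u) T = - (\sum_(S : st | e \notin S.1) u (phi S) * dcoef G (phi S) (phi T)).
  rewrite split2 mulr_sumr -sumrN; apply: eq_bigr => S eS.
  exact: homQterm.
move: dz; rewrite split1 => /eqP; rewrite addr_eq0 => /eqP <-.
move=> /(congr1 (fun k => eps T * k)); rewrite mulrA eps2 mul1r => ->.
by rewrite mulrCA eps2 mulr1.
Qed.

Lemma jdeg_conn s1 s2 c : conn G s1 =2 conn G s2 -> jdeg G (s1, c) = jdeg G (s2, c).
Proof.
move=> E; rewrite /jdeg /=.
have EE : component G s1 =1 component G s2 by move=> w; apply/setP=> y; rewrite !inE E.
by rewrite (eq_imset _ EE).
Qed.

Lemma deg_sw i j S : in_degree G i j (swst S) <-> in_degree G i j S.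
Proof.
rewrite /in_degree /swst /= card_sw.
by rewrite (@jdeg_conn (sw S.1) S.1 S.2 (conn_sw S.1)); case: S.
Qed.

Lemma deg_phi i j S : e' \in S.1 -> e \notin S.1 ->
  in_degree G i.+1 j (phi S) <-> in_degree G i j S.
Proof.
move=> e'S eS; rewrite /in_degree /phi /= cardsU1 eS.
rewrite (@jdeg_conn (e |: S.1) S.1 S.2 (conn_e e'S)); case: S e'S eS => s c /= _ _.
by split=> [[/eqP]|[->]]; [rewrite eqSS => /eqP -> | ].
Qed.

Lemma dfullB (H : sgraph V m) (a b : {ffun st -> int}) T :
  dfull H (a - b) T = dfull H a T - dfull H b T.
Proof. by rewrite /dfull -sumrB; apply: eq_bigr => S _; rewrite !ffunE mulrBl. Qed.

Lemma dfull0 (H : sgraph V m) T : dfull H 0 T = 0.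
Proof. by rewrite /dfull big1 // => S _; rewrite ffunE mul0r. Qed.

Lemma subE (a b : {ffun st -> int}) S : (a - b) S = a S - b S.
Proof. by rewrite !ffunE. Qed.

Section Abstract.
Variables (W WD : st -> Prop).
Hypotheses (hWD : forall S, WD S <-> W S /\ e' \notin S.1)
  (hWsw : forall S, W S -> W (swst S))
  (hWphi : forall S, e' \in S.1 -> e \notin S.1 -> (W S <-> W (phi S))).

Lemma supp_f i j (x : {ffun st -> int}) :
  supported (fun S => W S /\ in_degree G i j S) x ->
  supported (fun S => WD S /\ in_degree D i j S) (fmap x).
Proof.
move=> sx S nS; rewrite ffunE; case: ifP => // e'S; apply: sx => -[WS dS].
by apply: nS; split=> //; apply/hWD; rewrite e'S.
Qed.

Lemma supp_g i j (y : {ffun st -> int}) :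
  supported (fun S => WD S /\ in_degree D i j S) y ->
  supported (fun S => W S /\ in_degree G i j S) (gmap y).
Proof.
move=> sy S nS; rewrite ffunE; case: ifP => e'S.
  case: ifP => // eS; rewrite sy ?mulr0 // => -[/hWD [Ws _] dS].
  apply: nS; split; first by rewrite -(swstK S); apply: hWsw.
  by apply/deg_sw.
by apply: sy => -[/hWD [WS _] dS]; apply: nS.
Qed.

Lemma ysupp i j (y : {ffun st -> int}) :
  supported (fun S => WD S /\ in_degree D i j S) y -> forall S, e' \in S.1 -> y S = 0.
Proof. by move=> sy S e'S; apply: sy => -[/hWD [_ /negP]]. Qed.

Lemma WDsw T : W T -> e' \in T.1 -> e \notin T.1 -> WD (swst T).
Proof.
move=> WT e'T eT; apply/hWD; split; first exact: hWsw.
by rewrite /swst /= in_sw swapf_e'.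
Qed.

Lemma g_cob i j (z : {ffun st -> int}) (y : {ffun st -> int}) :
  supported (fun S => WD S /\ in_degree D i j S) z ->
  (forall T, WD T -> y T = dfull D z T) ->
  forall T, W T -> gmap y T = dfull G (gmap z) T.
Proof.
move=> sz yz T WT.
have zs := ysupp sz.
case: (boolP (e' \in T.1)) => e'T; last first.
  by rewrite gchainR // ffunE (negbTE e'T) yz //; apply/hWD.
case: (boolP (e \in T.1)) => eT.
  by rewrite gchainP // ffunE e'T eT.
by rewrite gchainQ // ffunE e'T (negbTE eT) yz //; apply: WDsw.
Qed.

Lemma absiso i j : quot_iso (cocycle G W i j) (coboundary G W i j)
  (cocycle D WD i j) (coboundary D WD i j).
Proof.
have fZ : forall x, cocycle G W i j x -> cocycle D WD i j (fmap x).
  move=> x [sx cx]; split; first exact: supp_f.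
  by move=> T /hWD [WT e'T]; rewrite fchain // cx.
have gZ : forall y, cocycle D WD i j y -> cocycle G W i j (gmap y).
  move=> y [sy cy]; split; first exact: supp_g.
  move=> T WT; rewrite -(@g_cob i j y 0 sy _ T WT); last first.
    by move=> T' WT'; rewrite ffunE cy.
  by rewrite !ffunE; case: ifP => // _; case: ifP => // _; rewrite mulr0.
exists fmap, gmap; split; [split|split; [split|split]].
- exact: fZ.
- by move=> x y _ _; apply/ffunP=> S; rewrite !ffunE; case: ifP; rewrite ?addr0.
- move=> x [sx cb]; split; first exact: supp_f.
  clear fZ gZ; case: i sx cb => [|i] sx cb.
    by rewrite cb; apply/ffunP => S; rewrite !ffunE; case: ifP.
  case: cb => y [sy xy]; exists (fmap y); split; first exact: supp_f.
  by move=> T /hWD [WT e'T]; rewrite fchain // ffunE (negbTE e'T) xy.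
- exact: gZ.
- move=> x y _ _; apply/ffunP=> S; rewrite !ffunE.
  by case: ifP => _ //; case: ifP => _; rewrite ?addr0 ?mulrDr.
- move=> y [sy cb]; split; first exact: supp_g.
  clear fZ gZ; case: i sy cb => [|i] sy cb.
    rewrite cb; apply/ffunP => S; rewrite !ffunE.
    by case: ifP => // _; case: ifP => // _; rewrite mulr0.
  case: cb => z [sz yz]; exists (gmap z); split; first exact: supp_g.
  exact: g_cob sz yz.
- move=> x Zx; set u := gmap (fmap x) - x.
  have Zg := gZ _ (fZ _ Zx); case: Zx => sx cx; case: Zg => sg cg.
  have su : supported (fun S => W S /\ in_degree G i j S) u.
    by move=> S nS; rewrite /u subE sx // sg // subrr.
  have us : forall S, e' \notin S.1 -> u S = 0.
    by move=> S e'S; rewrite /u subE !ffunE (negbTE e'S) subrr.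
  have cu : forall T, W T -> dfull G u T = 0.
    by move=> T WT; rewrite /u dfullB cg // cx // subrr.
  split; first exact: su.
  clear fZ gZ; move: sx cx sg cg su cu; case: i => [|i] sx cx sg cg su cu.
    apply/ffunP => S; rewrite [RHS]ffunE.
    case: (boolP (e' \in S.1)) => e'S; last exact: us.
    apply: su => -[_ [/eqP]]; rewrite cards_eq0 => /eqP S0.
    by move: e'S; rewrite S0 inE.
  exists (hmap u); split.
    move=> S nS; rewrite ffunE; case: ifP => // /andP[e'S eS].
    rewrite su ?mulr0 // => -[WS dS]; apply: nS; split.
      by apply/(hWphi e'S eS).
    by apply/(deg_phi _ _ e'S eS).
  move=> T WT.
  case: (boolP (e' \in T.1)) => e'T; last exact: homR.
  case: (boolP (e \in T.1)) => eT; first exact: homP.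
  apply: homQ => //; apply: cu; exact/(hWphi e'T eT).
- move=> y [sy cy].
  have -> : fmap (gmap y) - y = 0.
    apply/ffunP => S; rewrite !ffunE; case: ifP => e'S.
      by rewrite (ysupp sy) // subrr.
    by rewrite e'S subrr.
  split; first by move=> S _; rewrite ffunE.
  clear fZ gZ sy cy; case: i => [|i] //; exists 0; split; first by move=> S _; rewrite ffunE.
  by move=> T _; rewrite dfull0 ffunE.
Qed.
End Abstract.

Definition JP (t : 'I_m * (V * V)) := joins G t.1 t.2.1 t.2.2.

Lemma all_zip_map (f : 'I_m -> 'I_m) :
  (forall a x y, joins G (f a) x y = joins G a x y) ->
  forall es (l : seq (V * V)), all JP (zip (map f es) l) = all JP (zip es l).
Proof.
move=> hf; elim=> [|a es IH] [|p l] //=.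
by rewrite IH /JP /= hf.
Qed.

Lemma nc_map (f : 'I_m -> 'I_m) s1 s2 es vs :
  (forall a x y, joins G (f a) x y = joins G a x y) -> (forall a, neg G (f a) = neg G a) ->
  {in es &, injective f} -> (forall a, a \in es -> f a \in s2) ->
  neg_circuit G s1 es vs -> neg_circuit G s2 (map f es) vs.
Proof.
move=> hj hn hinj hs [/and5P[k0 /eqP svs ues uvs /andP[_ ajs]] ng].
split; last by rewrite count_map (eq_count (a2 := neg G)) // => a /=; rewrite hn.
apply/and5P; split; rewrite ?size_map //.
- by rewrite svs.
- by rewrite map_inj_in_uniq.
apply/andP; split; first by apply/allP => b /mapP [a aes ->]; apply: hs.
have -> : (fun t : 'I_m * (V * V) => joins G t.1 t.2.1 t.2.2) = JP by [].
by rewrite all_zip_map.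
Qed.

Lemma nc_sub s1 s2 es vs : s1 \subset s2 -> neg_circuit G s1 es vs -> neg_circuit G s2 es vs.
Proof.
move=> /subsetP sub [/and5P[k0 svs ues uvs /andP[aes ajs]] ng]; split=> //.
apply/and5P; split=> //; apply/andP; split=> //.
by apply/allP => a /(allP aes) /sub.
Qed.

Lemma joins2 a x y x' y' : joins G a x y -> joins G a x' y' ->
  (x = x' /\ y = y') \/ (x = y' /\ y = x').
Proof.
rewrite /joins.
by case/orP=> /andP[/eqP <- /eqP <-]; case/orP=> /andP[/eqP <- /eqP <-]; auto.
Qed.

Lemma both_contra s es vs : neg_circuit G s es vs -> e \in es -> e' \in es -> False.
Proof.
move=> [/and5P[k0 /eqP svs ues uvs /andP[_ ajs]] ng] ees e'es.
case: vs svs uvs ajs => [|v0 vs'] svs uvs ajs; first by move: k0; rewrite -svs.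
set vs := v0 :: vs' in svs uvs ajs.
set k := size es.
have nxt : forall n, (n < k)%N -> joins G (nth e es n) (nth v0 vs n)
    (nth v0 vs (if (n.+1 < k)%N then n.+1 else 0%N)).
  move=> n nk.
  have szip : size (zip es (zip vs (rot 1 vs))) = k by rewrite !size_zip size_rot svs !minnn.
  move/(all_nthP (e, (v0, v0))): ajs; rewrite szip => /(_ n nk).
  rewrite nth_zip; last by rewrite size_zip size_rot svs minnn.
  rewrite /= nth_zip ?size_rot //=.
  rewrite rot1_cons nth_rcons.
  have sv' : size vs' = k.-1 by rewrite /k -svs.
  rewrite sv'; case: ifP => nk1.
    by rewrite ifT //; rewrite ltn_predRL in nk1.
  by rewrite -ltn_predRL nk1; case: ifP.
set i := index e es; set i' := index e' es.
have ik : (i < k)%N by rewrite index_mem.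
have i'k : (i' < k)%N by rewrite index_mem.
have ni : nth e es i = e by rewrite nth_index.
have ni' : nth e es i' = e' by rewrite nth_index.
have ii' : i != i' by apply: contraNneq ee' => E; rewrite -ni E ni'.
have j1 := nxt i ik; have j2 := nxt i' i'k.
rewrite ni in j1; rewrite ni' -joins_par in j2.
have nv : forall a b, (a < k)%N -> (b < k)%N -> nth v0 vs a = nth v0 vs b -> a = b.
  by move=> a b ak bk /eqP; rewrite nth_uniq ?svs // => /eqP.
have lt_if : forall n, (n < k)%N -> ((if (n.+1 < k)%N then n.+1 else 0%N) < k)%N.
  by move=> n nk; case: ifP => //; move: nk; case: (k).
case: (joins2 j1 j2) => [[E1 _]|[E1 E2]].
  by move: ii'; rewrite (nv _ _ ik i'k E1) eqxx.
have h1 := nv _ _ ik (lt_if _ i'k) E1.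
have h2 := nv _ _ (lt_if _ ik) i'k E2.
have k2 : k = 2%N := arith2 ik i'k ii' h1 (esym h2).
have k2' : size es = 2%N by [].
clear -ues ng ees e'es sgn ee' k2'.
case: es ues ng ees e'es k2' => [|a [|b [|]]] // + + + + _.
rewrite /= !inE addn0 => /andP[ab _] ng.
case/orP=> /eqP ea; case/orP=> /eqP e'b.
- by move: ee'; rewrite ea e'b eqxx.
- by move: ng; rewrite -ea -e'b -sgn addnn odd_double.
- by move: ng; rewrite -ea -e'b -sgn addnn odd_double.
- by move: ee'; rewrite ea e'b eqxx.
Qed.

Lemma circ_all s es vs : neg_circuit G s es vs -> forall a, a \in es -> a \in s.
Proof. by move=> [/and5P[_ _ _ _ /andP[/allP h _]] _]. Qed.

Lemma NC s es vs : e' \in s -> neg_circuit G (e |: s) es vs ->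
  exists es', neg_circuit G s es' vs.
Proof.
move=> e's H; have hin := circ_all H.
case: (boolP (e \in es)) => ees; last first.
  exists (map id es); apply: (nc_map (f := id)) H => // a aes.
  by move: (hin a aes); rewrite in_setU1 => /orP[/eqP ae|//]; move: ees; rewrite -ae aes.
case: (boolP (e' \in es)) => e'es; first by case: (both_contra H ees e'es).
pose r a := if a == e then e' else a.
exists (map r es); apply: (nc_map (f := r)) H.
- by move=> a x y; rewrite /r; case: eqP => // ->; rewrite joins_par.
- by move=> a; rewrite /r; case: eqP => // ->.
- move=> a b ain bin; rewrite /r; case: eqP => [->|ae]; case: eqP => [->|be] //.
    by move=> E; move: e'es; rewrite E bin.
  by move=> E; move: e'es; rewrite -E ain.
- move=> a aes; rewrite /r; case: eqP => // ae.
  by move: (hin a aes); rewrite in_setU1 => /orP[/eqP|//].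
Qed.

Lemma nc_sw s es vs : neg_circuit G (sw s) es vs -> neg_circuit G s (map swapf es) vs.
Proof.
move=> H; have hin := circ_all H; apply: (nc_map (f := swapf)) H.
- exact: joins_swapf.
- exact: neg_swapf.
- by move=> a b _ _; apply: swapf_inj.
- by move=> a /hin; rewrite in_sw.
Qed.

Lemma enh_D S : is_enhanced D S <-> is_enhanced G S /\ e' \notin S.1.
Proof.
rewrite /is_enhanced; have -> : edges D = edges G :\ e' by [].
rewrite subsetD1; split; [case=> /andP[a b] c | case=> [[a c] b]]; split => //.
by rewrite a b.
Qed.

Lemma enh_sw S : is_enhanced G S -> is_enhanced G (swst S).
Proof.
case=> sE lab; split; first exact: sw_sub.
by move=> u v; rewrite /swst /= conn_sw; apply: lab.
Qed.

Lemma enh_phi S : e' \in S.1 -> (is_enhanced G S <-> is_enhanced G (phi S)).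
Proof.
move=> e'S; rewrite /is_enhanced /phi /= subUset sub1set eE /=.
split=> [[a b]|[a b]]; split=> // u v; [rewrite conn_e // | ]; move=> h; apply: b => //.
by rewrite conn_e.
Qed.

Lemma unb_sw s w : unbalanced_comp G (sw s) w -> unbalanced_comp G s w.
Proof.
case=> es [vs [nc al]]; exists (map swapf es), vs; split; first exact: nc_sw.
by apply: sub_all al => v; rewrite conn_sw.
Qed.

Lemma unb_phi s w : e' \in s -> (unbalanced_comp G (e |: s) w <-> unbalanced_comp G s w).
Proof.
move=> e's; split.
  case=> es [vs [nc al]]; case: (NC e's nc) => es' nc'; exists es', vs; split=> //.
  by apply: sub_all al => v; rewrite conn_e.
case=> es [vs [nc al]]; exists es, vs; split; first by apply: nc_sub nc; apply: subsetUr.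
by apply: sub_all al => v; rewrite conn_e.
Qed.

Lemma bal_sw s : balanced G s -> balanced G (sw s).
Proof. by move=> B es vs /nc_sw; apply: B. Qed.

Lemma bal_phi s : e' \in s -> (balanced G s <-> balanced G (e |: s)).
Proof.
move=> e's; split=> B es vs nc.
  by case: (NC e's nc) => es' /B.
by apply: (B es vs); apply: nc_sub nc; apply: subsetUr.
Qed.

Lemma WSG_iso i j : H_iso G (delete_edge G e') i j.
Proof.
apply: (absiso (W := W_SG G) (WD := W_SG D)).
- move=> S; split.
    by case=> /enh_D [en e'S] unb.
  by case=> [[en unb] e'S]; split=> //; apply/enh_D.
- case=> s c [en unb]; split; first exact: enh_sw.
  by move=> w /unb_sw; apply: unb.
- move=> [s c] /= e'S eS; rewrite /W_SG (enh_phi (S := (s, c))) //=.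
  split=> [[a b]|[a b]]; split=> // w; [move/(unb_phi w e'S)|move/(unb_phi w e'S)]; apply: b.
Qed.

Lemma Wb_iso i j : Hb_iso G (delete_edge G e') i j.
Proof.
apply: (absiso (W := W_b G) (WD := W_b D)).
- move=> S; split.
    by case=> /enh_D [en e'S] unb.
  by case=> [[en unb] e'S]; split=> //; apply/enh_D.
- by case=> s c [en bal]; split; [exact: enh_sw | exact: bal_sw].
- move=> [s c] /= e'S eS; rewrite /W_b (enh_phi (S := (s, c))) //= (bal_phi e'S).
  by [].
Qed.
End Main.

Local Close Scope ring_scope.

Theorem proposition5p8 (V : finType) (m : nat) (G : sgraph V m) (e e' : 'I_m) :
  e \in edges G -> e' \in edges G -> e != e' ->
  parallel G e e' -> neg G e = neg G e' ->
  forall i j : nat,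
    H_iso G (delete_edge G e') i j /\ Hb_iso G (delete_edge G e') i j.
Proof.
move=> eE e'E ee' par sgn i j; split.
  exact: (WSG_iso eE e'E ee' par sgn i j).
exact: (Wb_iso eE e'E ee' par sgn i j).
Qed.
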